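(* Let $\mathsf H$ be a horizontal connection on $\mathsf q_M$. Then the map $\nabla_{\mathsf H}:M\to\Omega(A)\otimes_AM$, $\nabla_{\mathsf H}(m):=\mathsf H(\mathsf d(m))$ (which lands in $\Omega(A)\otimes_AM\subseteq\mathsf T(A)\otimes_A\mathsf S_A(M)$), is a module connection on $M$.
   Context: Fix a commutative ring $R$, a commutative $R$-algebra $A$ and an $A$-module $M$. ''Algebra'' means commutative $R$-algebra and ''algebra map'' means $R$-algebra homomorphism. $\Omega(A)$ is the $A$-module of Kähler differentials of $A$ over $R$, with universal derivation $\mathsf d:A\to\Omega(A)$. A (module) connection on $M$ is an $R$-linear map $\nabla:M\to\Omega(A)\otimes_AM$ such that $\nabla(am)=a\nabla(m)+\mathsf d(a)\otimes_Am$ for all $a\in A$, $m\in M$. Tangent algebras: for an algebra $B$, $\mathsf T(B):=\mathrm{Sym}_B(\Omega(B))$, i.e. the $B$-algebra generated by symbols $\mathsf d(b)$ ($b\in B$) subject to $\mathsf d(b+b')=\mathsf d(b)+\mathsf d(b')$, $\mathsf d(bb')=b\,\mathsf d(b')+b'\,\mathsf d(b)$, $\mathsf d(r1)=0$ ($r\in R$). An algebra map out of $\mathsf T(B)$ is determined by its values on the generators $b$, $\mathsf d(b)$. Write $\mathsf T^2(B)=\mathsf T(\mathsf T(B))$ and denote the universal derivation $\mathsf T(B)\to\mathsf T^2(B)$ by $\mathsf d'$; so $\mathsf T^2(B)$ is generated over $B$ by $\mathsf d(b),\mathsf d'(b),\mathsf d'\mathsf d(b)$. For an algebra map $h:X\to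 Y$, $\mathsf T(h):\mathsf T(X)\to\mathsf T(Y)$ sends $x\mapsto h(x)$ and $\delta_X(x)\mapsto\delta_Y(h(x))$, where $\delta$ denotes the relevant universal derivation ($\mathsf d$ for $B\to\mathsf T(B)$, $\mathsf d'$ for $\mathsf T(B)\to\mathsf T^2(B)$). Algebra maps defined on generators $b\in B$: $\mathsf p_B:B\to\mathsf T(B)$ the inclusion; $0_B:\mathsf T(B)\to B$, $b\mapsto b$, $\mathsf d(b)\mapsto 0$; $\ell_B:\mathsf T^2(B)\to\mathsf T(B)$, $b\mapsto b$, $\mathsf d(b)\mapsto 0$, $\mathsf d'(b)\mapsto0$, $\mathsf d'\mathsf d(b)\mapsto\mathsf d(b)$; $\mathsf c_B:\mathsf T^2(B)\to\mathsf T^2(B)$, $b\mapsto b$, $\mathsf d(b)\mapsto\mathsf d'(b)$, $\mathsf d'(b)\mapsto\mathsf d(b)$, $\mathsf d'\mathsf d(b)\mapsto\mathsf d'\mathsf d(b)$. (These are, read in algebras, the structure maps of the Rosický tangent structure on affine schemes over $R$, i.e. on the opposite of the category of commutative $R$-algebras.) Differential bundle of $M$: $\mathsf S_A(M)$ is the symmetric $A$-algebra on $M$ (generated by $a\in A$, $m\in M$). Algebra maps: $\mathsf q_M:A\to\mathsf S_A(M)$ the inclusion; $\lambda_M:\mathsf T(\mathsf S_A(M))\to\mathsf S_A(M)$, $a\mapsto a$, $m\mapsto0$, $\mathsf d(a)\mapsto 0$, $\mathsf d(m)\mapsto m$. A horizontal connection on $\mathsf q_M$ is an algebra map $\mathsf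 H:\mathsf T(\mathsf S_A(M))\to\mathsf T(A)\otimes_A\mathsf S_A(M)$ such that (H1) $\mathsf H(\mathsf T(\mathsf q_M)(w))=w\otimes1$ for all $w\in\mathsf T(A)$; (H2) $\mathsf H(v)=1\otimes v$ for all $v\in\mathsf S_A(M)$; (H3) $(\ell_A\otimes0_{\mathsf S_A(M)})\circ\theta\circ\mathsf T(\mathsf H)=\mathsf H\circ\ell_{\mathsf S_A(M)}$; (H4) $(0_{\mathsf T(A)}\otimes\lambda_M)\circ\theta\circ\mathsf T(\mathsf H)=\mathsf H\circ\mathsf T(\lambda_M)\circ\mathsf c_{\mathsf S_A(M)}$. Here $\mathsf T^2(A)\otimes_{\mathsf T(A)}\mathsf T(\mathsf S_A(M))$ is formed via $\mathsf T(\mathsf p_A):\mathsf T(A)\to\mathsf T^2(A)$ ($a\mapsto a$, $\mathsf d(a)\mapsto\mathsf d'(a)$) and $\mathsf T(\mathsf q_M)$; $\theta:\mathsf T(\mathsf T(A)\otimes_A\mathsf S_A(M))\to\mathsf T^2(A)\otimes_{\mathsf T(A)}\mathsf T(\mathsf S_A(M))$ is the canonical isomorphism, $w\otimes v\mapsto w\otimes v$, $\mathsf d(w\otimes v)\mapsto\mathsf d'(w)\otimes v+w\otimes\mathsf d(v)$; the maps $\ell_A\otimes0_{\mathsf S_A(M)}$ and $0_{\mathsf T(A)}\otimes\lambda_M$ into $\mathsf T(A)\otimes_A\mathsf S_A(M)$ are induced factorwise, where $0_{\mathsf T(A)}:\mathsf T^2(A)\to\mathsf T(A)$ sends $a\mapsto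 a$, $\mathsf d(a)\mapsto\mathsf d(a)$, $\mathsf d'(a)\mapsto0$, $\mathsf d'\mathsf d(a)\mapsto0$. *)

(* Defs.v *)
From HB Require Import structures.
From mathcomp Require Import all_boot all_algebra.
From mathcomp Require Import boolp.

Set Implicit Arguments.
Unset Strict Implicit.
Unset Printing Implicit Defensive.
Import GRing.Theory.
Local Open Scope ring_scope.

Section Presented.
Variables (R : comPzRingType) (G : Type).

Inductive term : Type :=
| tvar of G | tcst of R | tadd of term & term | tmul of term & term | topp of term.

Variable rel : term -> term -> Prop.

Inductive cong : term -> term -> Prop :=
| c_refl t : cong t t
| c_sym t u : cong t u -> cong u t
| c_trans t u w : cong t u -> cong u w -> cong t w
| c_add t t' u u' : cong t t' -> cong u u' -> cong (tadd t u) (tadd t' u')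
| c_mul t t' u u' : cong t t' -> cong u u' -> cong (tmul t u) (tmul t' u')
| c_opp t t' : cong t t' -> cong (topp t) (topp t')
| c_addA t u w : cong (tadd t (tadd u w)) (tadd (tadd t u) w)
| c_addC t u : cong (tadd t u) (tadd u t)
| c_add0 t : cong (tadd (tcst 0) t) t
| c_addN t : cong (tadd (topp t) t) (tcst 0)
| c_mulA t u w : cong (tmul t (tmul u w)) (tmul (tmul t u) w)
| c_mulC t u : cong (tmul t u) (tmul u t)
| c_mul1 t : cong (tmul (tcst 1) t) t
| c_mulDl t u w : cong (tmul (tadd t u) w) (tadd (tmul t w) (tmul u w))
| c_cadd r s : cong (tcst (r + s)) (tadd (tcst r) (tcst s))
| c_cmul r s : cong (tcst (r * s)) (tmul (tcst r) (tcst s))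
| c_rel t u : rel t u -> cong t u.

Definition pres : Type := {P : term -> Prop | exists t, P = cong t}.
HB.instance Definition _ := gen_eqMixin pres.
HB.instance Definition _ := gen_choiceMixin pres.

Definition pi (t : term) : pres := exist _ (cong t) (ex_intro _ t erefl).
Definition repr (q : pres) : term := proj1_sig (cid (proj2_sig q)).

Lemma reprK q : pi (repr q) = q.
Proof.
case: q => P HP; rewrite /repr /pi /=.
case: (cid HP) => t /= Pt; subst P.
by congr exist; apply: Prop_irrelevance.
Qed.

Lemma sig_eq (P Q : term -> Prop) (p : exists t, P = cong t)
  (q : exists t, Q = cong t) : P = Q -> exist _ P p = exist _ Q q :> pres.
Proof. by move=> E; subst Q; congr exist; apply: Prop_irrelevance. Qed.

Lemma eq_pi t u : cong t u -> pi t = pi u.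
Proof.
move=> tu; apply: sig_eq.
apply: funext => w; apply: propext; split => h.
  exact: c_trans (c_sym tu) h.
exact: c_trans tu h.
Qed.

Lemma pi_cong t u : pi t = pi u -> cong t u.
Proof. by move=> /(congr1 (@proj1_sig _ _)) /= ->; apply: c_refl. Qed.

Lemma repr_cong t : cong (repr (pi t)) t.
Proof. by apply: pi_cong; rewrite reprK. Qed.

Lemma piP q : exists t, q = pi t.
Proof. by exists (repr q); rewrite reprK. Qed.

Definition pzero := pi (tcst 0).
Definition pone := pi (tcst 1).
Definition padd q q' := pi (tadd (repr q) (repr q')).
Definition pmul q q' := pi (tmul (repr q) (repr q')).
Definition popp q := pi (topp (repr q)).

Lemma paddE t u : padd (pi t) (pi u) = pi (tadd t u).
Proof. by apply: eq_pi; apply: c_add; apply: repr_cong. Qed.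
Lemma pmulE t u : pmul (pi t) (pi u) = pi (tmul t u).
Proof. by apply: eq_pi; apply: c_mul; apply: repr_cong. Qed.
Lemma poppE t : popp (pi t) = pi (topp t).
Proof. by apply: eq_pi; apply: c_opp; apply: repr_cong. Qed.

Lemma paddA : associative padd.
Proof.
move=> x y z; case: (piP x) (piP y) (piP z) => [t ->] [u ->] [w ->].
by rewrite !paddE; apply: eq_pi; apply: c_addA.
Qed.
Lemma paddC : commutative padd.
Proof.
move=> x y; case: (piP x) (piP y) => [t ->] [u ->].
by rewrite !paddE; apply: eq_pi; apply: c_addC.
Qed.
Lemma padd0 : left_id pzero padd.
Proof.
move=> x; case: (piP x) => [t ->].
by rewrite paddE; apply: eq_pi; apply: c_add0.
Qed.
Lemma paddN : left_inverse pzero popp padd.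
Proof.
move=> x; case: (piP x) => [t ->].
by rewrite poppE paddE; apply: eq_pi; apply: c_addN.
Qed.

HB.instance Definition _ := GRing.isZmodule.Build pres paddA paddC padd0 paddN.

Lemma pmulA : associative pmul.
Proof.
move=> x y z; case: (piP x) (piP y) (piP z) => [t ->] [u ->] [w ->].
by rewrite !pmulE; apply: eq_pi; apply: c_mulA.
Qed.
Lemma pmulC : commutative pmul.
Proof.
move=> x y; case: (piP x) (piP y) => [t ->] [u ->].
by rewrite !pmulE; apply: eq_pi; apply: c_mulC.
Qed.
Lemma pmul1 : left_id pone pmul.
Proof.
move=> x; case: (piP x) => [t ->].
by rewrite pmulE; apply: eq_pi; apply: c_mul1.
Qed.
Lemma pmulDl : left_distributive pmul padd.
Proof.
move=> x y z; case: (piP x) (piP y) (piP z) => [t ->] [u ->] [w ->].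
rewrite paddE !pmulE paddE; apply: eq_pi; apply: c_mulDl.
Qed.

HB.instance Definition _ := GRing.Zmodule_isComPzRing.Build pres pmulA pmulC pmul1 pmulDl.

Definition pgen (g : G) : pres := pi (tvar g).
Definition pcst (r : R) : pres := pi (tcst r).

End Presented.

Section Alg.
Variable R : comPzRingType.

Record ralg := RAlg { ralg_sort :> comPzRingType; inR : R -> ralg_sort }.

Definition alghom (X Y : ralg) (f : X -> Y) : Prop :=
  [/\ forall x y, f (x + y) = f x + f y,
      forall x y, f (x * y) = f x * f y,
      f 1 = 1 &
      forall r, f (inR X r) = inR Y r].

(** the algebra map characterised by the property P (e.g. by its values on
    generators); this is well defined whenever such a map exists and is unique *)
Definition the_hom (X Y : ralg) (P : (X -> Y) -> Prop) : X -> Y :=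
  match pselect (exists f, alghom f /\ P f) with
  | left e => proj1_sig (cid e)
  | right _ => fun _ => 0
  end.

Definition presAlg G (rel : term R G -> term R G -> Prop) : ralg :=
  @RAlg (pres rel) (@pcst R G rel).

(** Tangent algebra T(B) = Sym_B(Omega(B)), generated by b and d(b) *)
Section Tangent.
Variable B : ralg.
Local Notation tv x := (tvar R x).
Inductive T_rel : term R (B + B) -> term R (B + B) -> Prop :=
| T_add b b' : T_rel (tv (inl (b + b'))) (tadd (tv (inl b)) (tv (inl b')))
| T_mul b b' : T_rel (tv (inl (b * b'))) (tmul (tv (inl b)) (tv (inl b')))
| T_cst r : T_rel (tv (inl (inR B r))) (tcst _ r)
| T_dadd b b' : T_rel (tv (inr (b + b'))) (tadd (tv (inr b)) (tv (inr b')))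
| T_dmul b b' : T_rel (tv (inr (b * b')))
     (tadd (tmul (tv (inl b)) (tv (inr b'))) (tmul (tv (inl b')) (tv (inr b))))
| T_dcst r : T_rel (tv (inr (inR B r))) (tcst _ 0).

Definition Tan : ralg := presAlg T_rel.
Definition pT (b : B) : Tan := pgen T_rel (inl b).
Definition dT (b : B) : Tan := pgen T_rel (inr b).
End Tangent.

Definition Tmap (X Y : ralg) (h : X -> Y) : Tan X -> Tan Y :=
  the_hom (fun f => forall x, f (pT x) = pT (h x) /\ f (dT x) = dT (h x)).

Definition zeroT (B : ralg) : Tan B -> B :=
  the_hom (fun f => forall b, f (pT b) = b /\ f (dT b) = 0).

(** in T^2(B) = T(T(B)):  b = pT (pT b), d(b) = pT (dT b),
    d'(b) = dT (pT b), d'd(b) = dT (dT b) *)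
Definition ellT (B : ralg) : Tan (Tan B) -> Tan B :=
  the_hom (fun f => forall b,
    [/\ f (pT (pT b)) = pT b, f (pT (dT b)) = 0,
        f (dT (pT b)) = 0 & f (dT (dT b)) = dT b]).

Definition cT (B : ralg) : Tan (Tan B) -> Tan (Tan B) :=
  the_hom (fun f => forall b,
    [/\ f (pT (pT b)) = pT (pT b), f (pT (dT b)) = dT (pT b),
        f (dT (pT b)) = pT (dT b) & f (dT (dT b)) = dT (dT b)]).

(** Tensor product X (x)_B Y of algebras, formed via fX : B -> X, fY : B -> Y *)
Section Tensor.
Variables (B X Y : ralg) (fX : B -> X) (fY : B -> Y).
Local Notation tv x := (tvar R x).
Inductive Tens_rel : term R (X + Y) -> term R (X + Y) -> Prop :=
| TX_add x x' : Tens_rel (tv (inl (x + x'))) (tadd (tv (inl x)) (tv (inl x')))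
| TX_mul x x' : Tens_rel (tv (inl (x * x'))) (tmul (tv (inl x)) (tv (inl x')))
| TX_cst r : Tens_rel (tv (inl (inR X r))) (tcst _ r)
| TY_add y y' : Tens_rel (tv (inr (y + y'))) (tadd (tv (inr y)) (tv (inr y')))
| TY_mul y y' : Tens_rel (tv (inr (y * y'))) (tmul (tv (inr y)) (tv (inr y')))
| TY_cst r : Tens_rel (tv (inr (inR Y r))) (tcst _ r)
| T_bal b : Tens_rel (tv (inl (fX b))) (tv (inr (fY b))).

Definition Tens : ralg := presAlg Tens_rel.
Definition tens (x : X) (y : Y) : Tens :=
  pgen Tens_rel (inl x) * pgen Tens_rel (inr y).
End Tensor.

Definition tensmap (B X Y B' X' Y' : ralg) (fX : B -> X) (fY : B -> Y)
  (fX' : B' -> X') (fY' : B' -> Y') (g : X -> X') (h : Y -> Y') :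
  Tens fX fY -> Tens fX' fY' :=
  the_hom (fun f => forall x y, f (tens fX fY x y) = tens fX' fY' (g x) (h y)).

End Alg.

Section Sym.
Variables (R : comPzRingType) (A : comPzRingType) (iA : {rmorphism R -> A})
  (M : lmodType A).
Definition AlgA : ralg R := @RAlg R A iA.
Local Notation tv x := (tvar R x).
Inductive S_rel : term R (A + M) -> term R (A + M) -> Prop :=
| S_add a a' : S_rel (tv (inl (a + a'))) (tadd (tv (inl a)) (tv (inl a')))
| S_mul a a' : S_rel (tv (inl (a * a'))) (tmul (tv (inl a)) (tv (inl a')))
| S_cst r : S_rel (tv (inl (iA r))) (tcst _ r)
| S_madd m m' : S_rel (tv (inr (m + m'))) (tadd (tv (inr m)) (tv (inr m')))
| S_scale a m : S_rel (tv (inr (a *: m))) (tmul (tv (inl a)) (tv (inr m))).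

Definition SymA : ralg R := presAlg S_rel.
Definition qM (a : AlgA) : SymA := pgen S_rel (inl a).
Definition sM (m : M) : SymA := pgen S_rel (inr m).

Definition lambdaM : Tan SymA -> SymA :=
  the_hom (fun f => (forall a, f (pT (qM a)) = qM a /\ f (dT (qM a)) = 0) /\
                    (forall m, f (pT (sM m)) = 0 /\ f (dT (sM m)) = sM m)).

Definition pA : AlgA -> Tan AlgA := @pT R AlgA.
Definition dA : AlgA -> Tan AlgA := @dT R AlgA.
Definition TpA : Tan AlgA -> Tan (Tan AlgA) := Tmap pA.
Definition TqM : Tan AlgA -> Tan SymA := Tmap qM.

Definition TAS : ralg R := Tens pA qM.
Definition T2ATS : ralg R :=
  Tens TpA TqM.

Definition thetaM : Tan TAS -> T2ATS :=
  the_hom (fun f => forall (w : Tan AlgA) (v : SymA),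
    f (pT (tens pA qM w v)) =
      tens TpA TqM (pT w) (pT v) /\
    f (dT (tens pA qM w v)) =
      tens TpA TqM (dT w) (pT v) +
      tens TpA TqM (pT w) (dT v)).

Definition ell_tens_zero : T2ATS -> TAS :=
  @tensmap R (Tan AlgA) (Tan (Tan AlgA)) (Tan SymA) AlgA (Tan AlgA) SymA
    TpA TqM pA qM
          (@ellT R AlgA) (@zeroT R SymA).
Definition zero_tens_lambda : T2ATS -> TAS :=
  @tensmap R (Tan AlgA) (Tan (Tan AlgA)) (Tan SymA) AlgA (Tan AlgA) SymA
    TpA TqM pA qM
          (@zeroT R (Tan AlgA)) lambdaM.

Definition horizontal_connection (H : Tan SymA -> TAS) : Prop :=
  [/\ alghom H,
      forall w : Tan AlgA,
        H (TqM w) = tens pA qM w 1,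
      forall v : SymA, H (pT v) = tens pA qM 1 v,
      forall x : Tan (Tan SymA),
        ell_tens_zero (thetaM (Tmap H x)) = H (@ellT R SymA x) &
      forall x : Tan (Tan SymA),
        zero_tens_lambda (thetaM (Tmap H x)) = H (Tmap lambdaM (@cT R SymA x))].

(** Omega(A) (x)_A M, viewed (as in the paper) inside T(A) (x)_A S_A(M):
    the image of the canonical map, i.e. all finite sums of a d(a') (x) m *)
Definition OmegaTensM (x : TAS) : Prop :=
  exists s : seq (A * A * M),
    x = \sum_(i <- s) tens pA qM (pA i.1.1 * dA i.1.2) (sM i.2).

Definition actA (a : A) (x : TAS) : TAS := tens pA qM (pA a) 1 * x.

Definition module_connection (nabla : M -> TAS) : Prop :=
  [/\ forall m, OmegaTensM (nabla m),
      forall m m', nabla (m + m') = nabla m + nabla m',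
      forall r m, nabla (iA r *: m) = inR TAS r * nabla m &
      forall a m, nabla (a *: m) =
        actA a (nabla m) + tens pA qM (dA a) (sM m)].

End Sym.

(* Main.v *)
Require Import Defs.
From HB Require Import structures.
From mathcomp Require Import all_boot all_algebra.
From mathcomp Require Import boolp.
From mathcomp Require Import ring.
Set Implicit Arguments. Unset Strict Implicit. Unset Printing Implicit Defensive.
Import GRing.Theory.
Local Open Scope ring_scope.

Notation ppi := Defs.pi.

Section Gen.
Variables (R : comPzRingType) (G : Type) (rel : term R G -> term R G -> Prop).

Lemma piD t u : ppi rel (tadd t u) = ppi rel t + ppi rel u.
Proof. by rewrite -paddE. Qed.
Lemma piM t u : ppi rel (tmul t u) = ppi rel t * ppi rel u.
Proof. by rewrite -pmulE. Qed.
Lemma piN t : ppi rel (topp t) = - ppi rel t.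
Proof. by rewrite -poppE. Qed.

Lemma pres_ind (Q : pres rel -> Prop) :
  (forall g, Q (pgen rel g)) -> (forall r, Q (pcst rel r)) ->
  (forall x y, Q x -> Q y -> Q (x + y)) -> (forall x y, Q x -> Q y -> Q (x * y)) ->
  (forall x, Q x -> Q (- x)) -> forall x, Q x.
Proof.
move=> Hg Hc Ha Hm Hn x; case: (Defs.piP x) => t ->; elim: t => //.
- by move=> t Ht u Hu; rewrite piD; apply: Ha.
- by move=> t Ht u Hu; rewrite piM; apply: Hm.
- by move=> t Ht; rewrite piN; apply: Hn.
Qed.

Section Lift.
Variables (C : comPzRingType) (c : R -> C).
Hypotheses (cD : forall r s, c (r + s) = c r + c s)
  (cM : forall r s, c (r * s) = c r * c s) (c1 : c 1 = 1).
Variables (v1 v2 : G -> C).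
Fixpoint ev t := match t with
  | tvar g => v1 g | tcst r => c r | tadd t u => ev t + ev u
  | tmul t u => ev t * ev u | topp t => - ev t end.
Fixpoint evd t := match t with
  | tvar g => v2 g | tcst r => 0 | tadd t u => evd t + evd u
  | tmul t u => ev t * evd u + evd t * ev u | topp t => - evd t end.
Hypothesis hrel : forall t u, rel t u -> ev t = ev u /\ evd t = evd u.

Lemma c0 : c 0 = 0.
Proof. by apply: (@addrI _ (c 0)); rewrite addr0 -cD addr0. Qed.

Lemma ev_cong t u : cong rel t u -> ev t = ev u /\ evd t = evd u.
Proof.
elim=> {t u} /=.
- by [].
- by move=> t u _ [-> ->].
- by move=> t u w _ [-> ->] _ [-> ->].
- by move=> t t' u u' _ [-> ->] _ [-> ->].
- by move=> t t' u u' _ [-> ->] _ [-> ->].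
- by move=> t t' _ [-> ->].
- by move=> t u w; rewrite !addrA.
- by move=> t u; rewrite addrC [evd u + _]addrC.
- by move=> t; rewrite c0 !add0r.
- by move=> t; rewrite c0 !addNr.
- by move=> t u w; split; ring.
- by move=> t u; split; ring.
- by move=> t; rewrite c1; split; ring.
- by move=> t u w; split; ring.
- by move=> r s; rewrite cD addr0.
- by move=> r s; rewrite cM; split; ring.
- by move=> t u /hrel.
Qed.

Definition lf (q : pres rel) := ev (Defs.repr q).
Definition ld (q : pres rel) := evd (Defs.repr q).
Lemma lf_pi t : lf (ppi rel t) = ev t.
Proof. by case: (ev_cong (repr_cong rel t)). Qed.
Lemma ld_pi t : ld (ppi rel t) = evd t.
Proof. by case: (ev_cong (repr_cong rel t)). Qed.
End Lift.
End Gen.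

Section RAlgGen.
Variable R : comPzRingType.
Definition good (Y : ralg R) := [/\ forall r s, inR Y (r + s) = inR Y r + inR Y s,
  forall r s, inR Y (r * s) = inR Y r * inR Y s & inR Y 1 = 1].
Definition der (X Y : ralg R) (f D : X -> Y) :=
  [/\ forall x y, D (x + y) = D x + D y,
      forall x y, D (x * y) = f x * D y + D x * f y & forall r, D (inR X r) = 0].

Lemma presAlg_good G (rel : term R G -> term R G -> Prop) : good (presAlg rel).
Proof.
split => /=.
- by move=> r s; rewrite /pcst -piD; apply: Defs.eq_pi; apply: c_cadd.
- by move=> r s; rewrite /pcst -piM; apply: Defs.eq_pi; apply: c_cmul.
- by [].
Qed.

Lemma lift_pres G (rel : term R G -> term R G -> Prop) (Y : ralg R) (v1 v2 : G -> Y) :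
  good Y ->
  (forall t u, rel t u -> ev (inR Y) v1 t = ev (inR Y) v1 u /\
                          evd (inR Y) v1 v2 t = evd (inR Y) v1 v2 u) ->
  exists f D, [/\ alghom (X := presAlg rel) f, der f D &
     forall g, f (pgen rel g) = v1 g /\ D (pgen rel g) = v2 g].
Proof.
case=> cD cM c1 hrel.
exists (lf (rel:=rel) (inR Y) v1), (ld (rel:=rel) (inR Y) v1 v2).
have Lf := lf_pi cD cM c1 hrel; have Ld := ld_pi cD cM c1 hrel.
split; [split| split|] => //=.
- move=> x y; case: (Defs.piP x) (Defs.piP y) => [t ->] [u ->].
  by rewrite -piD !Lf.
- move=> x y; case: (Defs.piP x) (Defs.piP y) => [t ->] [u ->].
  by rewrite -piM !Lf.
- by rewrite /GRing.one /= Lf.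
- by move=> r; rewrite Lf.
- move=> x y; case: (Defs.piP x) (Defs.piP y) => [t ->] [u ->].
  by rewrite -piD !Ld.
- move=> x y; case: (Defs.piP x) (Defs.piP y) => [t ->] [u ->].
  by rewrite -piM !Ld !Lf.
- by move=> r; rewrite Ld.
- by move=> g; rewrite Lf Ld.
Qed.

Lemma the_homP (X Y : ralg R) (P : (X -> Y) -> Prop) :
  (exists f, alghom f /\ P f) -> alghom (the_hom P) /\ P (the_hom P).
Proof.
move=> e; rewrite /the_hom; case: pselect => [e'|//].
by case: (cid e') => f /= [].
Qed.

Section HomLemmas.
Variables (X Y : ralg R).
Lemma hom0 (f : X -> Y) : alghom f -> f 0 = 0.
Proof. by case=> fD _ _ _; apply: (@addrI _ (f 0)); rewrite -fD !addr0. Qed.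
Lemma homN (f : X -> Y) : alghom f -> forall x, f (- x) = - f x.
Proof.
move=> hf x; have := hf; case=> fD _ _ _.
by apply: (@addrI _ (f x)); rewrite -fD !subrr hom0.
Qed.
Lemma der0 (f D : X -> Y) : der f D -> D 0 = 0.
Proof. by case=> dD _ _; apply: (@addrI _ (D 0)); rewrite -dD !addr0. Qed.
Lemma derN (f D : X -> Y) : der f D -> forall x, D (- x) = - D x.
Proof.
move=> hD x; have := hD; case=> dD _ _.
by apply: (@addrI _ (D x)); rewrite -dD !subrr (der0 hD).
Qed.
Lemma der1 (f D : X -> Y) : good X -> der f D -> D 1 = 0.
Proof. by case=> _ _ c1 [_ _ dC]; rewrite -c1 dC. Qed.
End HomLemmas.

Lemma hom_comp (X Y Z : ralg R) (f : X -> Y) (g : Y -> Z) :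
  alghom f -> alghom g -> alghom (g \o f).
Proof.
case=> fD fM f1 fC [gD gM g1 gC]; split => /=.
- by move=> x y; rewrite fD gD.
- by move=> x y; rewrite fM gM.
- by rewrite f1 g1.
- by move=> r; rewrite fC gC.
Qed.
Lemma der_comp_hom (X Y Z : ralg R) (g : X -> Y) (f D : Y -> Z) :
  der f D -> alghom g -> der (f \o g) (D \o g).
Proof.
case=> dD dM dC [gD gM g1 gC]; split => /=.
- by move=> x y; rewrite gD dD.
- by move=> x y; rewrite gM dM.
- by move=> r; rewrite gC dC.
Qed.
Lemma hom_comp_der (X Y Z : ralg R) (f D : X -> Y) (g : Y -> Z) :
  alghom g -> der f D -> der (g \o f) (g \o D).
Proof.
move=> hg; have := hg; case=> gD gM g1 gC [dD dM dC]; split => /=.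
- by move=> x y; rewrite dD gD.
- by move=> x y; rewrite dM gD !gM.
- by move=> r; rewrite dC hom0.
Qed.

Lemma hom_uniq G (rel : term R G -> term R G -> Prop) (Y : ralg R)
   (f g : presAlg rel -> Y) : alghom f -> alghom g ->
   (forall x, f (pgen rel x) = g (pgen rel x)) -> forall x, f x = g x.
Proof.
move=> hf hg E; have := hf; case=> fD fM _ fC; have := hg; case=> gD gM _ gC.
apply: pres_ind => //.
- by move=> r; have := fC r; have := gC r => /= -> ->.
- by move=> x y ex ey; rewrite fD gD ex ey.
- by move=> x y ex ey; rewrite fM gM ex ey.
- by move=> x ex; rewrite (homN hf) (homN hg) ex.
Qed.

Section TanBasics.
Variable B : ralg R.
Hypothesis gB : good B.

Lemma pT_hom : alghom (@pT R B).
Proof.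
case: gB => _ _ c1; split.
- by move=> x y; rewrite /pT /pgen (Defs.eq_pi (c_rel (T_add x y))) piD.
- by move=> x y; rewrite /pT /pgen (Defs.eq_pi (c_rel (T_mul x y))) piM.
- by rewrite -c1 /pT /pgen (Defs.eq_pi (c_rel (T_cst _ 1))).
- by move=> r; rewrite /pT /pgen (Defs.eq_pi (c_rel (T_cst _ r))).
Qed.

Lemma dT_der : der (@pT R B) (@dT R B).
Proof.
split.
- by move=> x y; rewrite /dT /pgen (Defs.eq_pi (c_rel (T_dadd x y))) piD.
- move=> x y; rewrite /dT /pgen (Defs.eq_pi (c_rel (T_dmul x y))) piD !piM.
  by rewrite [_ * ppi _ (tvar _ (inl y))]mulrC.
- by move=> r; rewrite /dT /pgen (Defs.eq_pi (c_rel (T_dcst _ r))).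
Qed.
End TanBasics.
Arguments pT_hom {B}.
Arguments dT_der {B}.

Lemma Tan_good (B : ralg R) : good (Tan B).
Proof. exact: presAlg_good. Qed.

Lemma inR0 (Y : ralg R) : good Y -> inR Y 0 = 0.
Proof. by case=> cD _ _; rewrite (c0 cD). Qed.

Lemma Tan_lift2 (B Y : ralg R) (h1 h2 d1 d2 : B -> Y) : good Y ->
  alghom h1 -> der h1 h2 -> der h1 d1 ->
  (forall x y, d2 (x + y) = d2 x + d2 y) ->
  (forall x y, d2 (x * y) =
      h1 x * d2 y + d1 x * h2 y + (h1 y * d2 x + d1 y * h2 x)) ->
  (forall r, d2 (inR B r) = 0) ->
  exists f D, [/\ alghom (X := Tan B) f, der f D &
    forall b, [/\ f (pT b) = h1 b, f (dT b) = h2 b, D (pT b) = d1 b & D (dT b) = d2 b]].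
Proof.
move=> gY [hD hM h1_ hC] [eD eM eC] [dD dM dC] d2D d2M d2C.
have hrel : forall t u, @T_rel R B t u ->
  ev (inR Y) (fun z => match z with inl b => h1 b | inr b => h2 b end) t =
  ev (inR Y) (fun z => match z with inl b => h1 b | inr b => h2 b end) u /\
  evd (inR Y) (fun z => match z with inl b => h1 b | inr b => h2 b end)
     (fun z => match z with inl b => d1 b | inr b => d2 b end) t =
  evd (inR Y) (fun z => match z with inl b => h1 b | inr b => h2 b end)
     (fun z => match z with inl b => d1 b | inr b => d2 b end) u.
  move=> t u [] * /=; split;
   rewrite ?hD ?hM ?hC ?eD ?eM ?eC ?dD ?dM ?dC ?d2D ?d2M ?d2C ?mulr0 ?mul0r ?addr0 //;
   try (by ring); by rewrite (inR0 gY).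
have [f [D [hf dfD P]]] := lift_pres gY hrel.
exists f, D; split => // b; case: (P (inl b)) => e1 e2; case: (P (inr b)) => e3 e4.
by split.
Qed.

Lemma der_zero (X Y : ralg R) (f : X -> Y) : der f (fun _ => 0).
Proof. by split => *; rewrite ?mulr0 ?mul0r ?addr0. Qed.

Lemma hom_id (X : ralg R) : alghom (@id X).
Proof. by []. Qed.

Lemma Tan_lift (B Y : ralg R) (h d : B -> Y) : good Y ->
  alghom h -> der h d ->
  exists f, alghom (X := Tan B) f /\ forall b, f (pT b) = h b /\ f (dT b) = d b.
Proof.
move=> gY hh hd.
have [|||f [D [hf _ P]]] := @Tan_lift2 B Y h d (fun _ => 0) (fun _ => 0) gY hh hd
  (der_zero h) => //; try (by move=> *; rewrite ?mulr0 ?mul0r ?addr0).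
by exists f; split => // b; case: (P b).
Qed.

Lemma Tmap_prop (X Y : ralg R) (h : X -> Y) : good Y -> alghom h ->
  alghom (Tmap h) /\ forall x, Tmap h (pT x) = pT (h x) /\ Tmap h (dT x) = dT (h x).
Proof.
move=> gY hh; apply: the_homP.
have [f [hf P]] := Tan_lift (Tan_good Y) (hom_comp hh (pT_hom gY))
   (der_comp_hom dT_der hh).
by exists f.
Qed.

Lemma zeroT_prop (B : ralg R) : good B ->
  alghom (@zeroT R B) /\ forall b : B, zeroT (pT b) = b /\ zeroT (dT b) = 0.
Proof.
move=> gB; apply: the_homP.
have [f [hf P]] := Tan_lift gB (@hom_id B) (der_zero id).
by exists f.
Qed.

Lemma ellT_prop (B : ralg R) : good B ->
  alghom (@ellT R B) /\ forall b : B,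
    [/\ ellT (pT (pT b)) = pT b, ellT (pT (dT b)) = 0,
        ellT (dT (pT b)) = 0 & ellT (dT (dT b)) = dT b].
Proof.
move=> gB; have gT := Tan_good B.
have [dD dM dC] := dT_der (B:=B).
have [|||f [D [hf hD P]]] := @Tan_lift2 B (Tan B) (@pT R B) (fun _ => 0) (fun _ => 0) (@dT R B) gT
  (pT_hom gB) (der_zero _) (der_zero _) => //.
- by move=> x y; rewrite dM; ring.
apply: the_homP.
have [F [hF PF]] := Tan_lift gT hf hD.
exists F; split => // b; case: (P b) => e1 e2 e3 e4.
case: (PF (pT b)) => -> ->; case: (PF (dT b)) => -> ->.
by split.
Qed.

Lemma cT_prop (B : ralg R) : good B ->
  alghom (@cT R B) /\ forall b : B,
    [/\ cT (pT (pT b)) = pT (pT b), cT (pT (dT b)) = dT (pT b),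
        cT (dT (pT b)) = pT (dT b) & cT (dT (dT b)) = dT (dT b)].
Proof.
move=> gB; have gT := Tan_good B; have gTT := Tan_good (Tan B).
have [dD dM dC] := dT_der (B:=B).
have hD2 := dT_der (B:=Tan B); have [eD eM eC] := hD2.
have [|||f [D [hf hD P]]] := @Tan_lift2 B (Tan (Tan B)) (@pT R (Tan B) \o @pT R B) (@dT R (Tan B) \o @pT R B)
  (@pT R (Tan B) \o @dT R B) (@dT R (Tan B) \o @dT R B) gTT (hom_comp (pT_hom gB) (pT_hom gT))
  (der_comp_hom hD2 (pT_hom gB)) (hom_comp_der (pT_hom gT) (dT_der (B:=B))) => /=.
- by move=> x y; rewrite dD eD.
- move=> x y; rewrite dM eD !eM.
  ring.
- by move=> r; rewrite dC (der0 hD2).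
apply: the_homP.
have [F [hF PF]] := Tan_lift gTT hf hD.
exists F; split => // b; case: (P b) => e1 e2 e3 e4.
case: (PF (pT b)) => -> ->; case: (PF (dT b)) => -> ->.
by split.
Qed.

Section TensBasics.
Variables (B X Y : ralg R) (fX : B -> X) (fY : B -> Y).
Hypotheses (gX : good X) (gY : good Y).
Definition tl (x : X) : Tens fX fY := pgen (Tens_rel fX fY) (inl x).
Definition tr (y : Y) : Tens fX fY := pgen (Tens_rel fX fY) (inr y).
Lemma tensE x y : tens fX fY x y = tl x * tr y. Proof. by []. Qed.
Lemma tbal b : tl (fX b) = tr (fY b).
Proof. exact: Defs.eq_pi (c_rel (T_bal _ _ b)). Qed.

Lemma tl_hom : alghom tl.
Proof.
case: gX => _ _ c1; split.
- by move=> x y; rewrite /tl /pgen (Defs.eq_pi (c_rel (TX_add _ _ x y))) piD.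
- by move=> x y; rewrite /tl /pgen (Defs.eq_pi (c_rel (TX_mul _ _ x y))) piM.
- by rewrite -c1 /tl /pgen (Defs.eq_pi (c_rel (TX_cst _ _ 1))).
- by move=> r; rewrite /tl /pgen (Defs.eq_pi (c_rel (TX_cst _ _ r))).
Qed.
Lemma tr_hom : alghom tr.
Proof.
case: gY => _ _ c1; split.
- by move=> x y; rewrite /tr /pgen (Defs.eq_pi (c_rel (TY_add _ _ x y))) piD.
- by move=> x y; rewrite /tr /pgen (Defs.eq_pi (c_rel (TY_mul _ _ x y))) piM.
- by rewrite -c1 /tr /pgen (Defs.eq_pi (c_rel (TY_cst _ _ 1))).
- by move=> r; rewrite /tr /pgen (Defs.eq_pi (c_rel (TY_cst _ _ r))).
Qed.

Lemma Tens_lift2 (Z : ralg R) (g1 e1 : X -> Z) (g2 e2 : Y -> Z) : good Z ->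
  alghom g1 -> der g1 e1 -> alghom g2 -> der g2 e2 ->
  (forall b, g1 (fX b) = g2 (fY b) /\ e1 (fX b) = e2 (fY b)) ->
  exists f D, [/\ alghom (X := Tens fX fY) f, der f D,
    forall x, f (tl x) = g1 x /\ D (tl x) = e1 x &
    forall y, f (tr y) = g2 y /\ D (tr y) = e2 y].
Proof.
move=> gZ [hD hM h1_ hC] [eD eM eC] [kD kM k1 kC] [dD dM dC] hb.
pose v1 := fun z => match z with inl x => g1 x | inr y => g2 y end.
pose v2 := fun z => match z with inl x => e1 x | inr y => e2 y end.
have hrel : forall t u, Tens_rel fX fY t u ->
  ev (inR Z) v1 t = ev (inR Z) v1 u /\ evd (inR Z) v1 v2 t = evd (inR Z) v1 v2 u.
  move=> t u Htu; destruct Htu; rewrite /= /v1 /v2; split;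
   rewrite ?hD ?hM ?hC ?eD ?eM ?eC ?kD ?kM ?kC ?dD ?dM ?dC ?mulr0 ?mul0r ?addr0 //;
   try (by ring); try (by rewrite (inR0 gZ)); by case: (hb b).
have [f [D [hf dfD P]]] := lift_pres gZ hrel.
by exists f, D; split => // [x|y]; [exact: (P (inl x)) | exact: (P (inr y))].
Qed.
End TensBasics.

Lemma tensmap_prop (B X Y B' X' Y' : ralg R) (fX : B -> X) (fY : B -> Y)
  (fX' : B' -> X') (fY' : B' -> Y') (g : X -> X') (h : Y -> Y') :
  good X -> good Y -> good X' -> good Y' -> alghom g -> alghom h ->
  (forall b, tl fX' fY' (g (fX b)) = tr fX' fY' (h (fY b))) ->
  alghom (@tensmap R B X Y B' X' Y' fX fY fX' fY' g h) /\
  forall x y, @tensmap R B X Y B' X' Y' fX fY fX' fY' g h (tens fX fY x y)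
              = tens fX' fY' (g x) (h y).
Proof.
move=> gX gY gX' gY' hg hh hb; apply: the_homP.
have [f [D [hf _ P1 P2]]] := @Tens_lift2 B X Y fX fY (Tens fX' fY')
  (tl fX' fY' \o g) (fun _ => 0) (tr fX' fY' \o h) (fun _ => 0)
  (presAlg_good _) (hom_comp hg (tl_hom fX' fY' gX')) (der_zero _)
  (hom_comp hh (tr_hom fX' fY' gY')) (der_zero _) (fun b => conj (hb b) (erefl _)).
exists f; split => // x y; have [_ fM _ _] := hf.
by rewrite tensE fM; case: (P1 x) => -> _; case: (P2 y) => -> _.
Qed.

Section SymBasics.
Variables (A : comPzRingType) (iA : {rmorphism R -> A}) (M : lmodType A).
Local Notation q := (@qM R A iA M).
Local Notation s := (@sM R A iA M).
Local Notation pa := (@pA R A iA).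
Local Notation da := (@dA R A iA).
Local Notation tp := (@TpA R A iA).
Local Notation tq := (@TqM R A iA M).

Lemma AlgA_good : good (AlgA iA).
Proof. by split => /= [r s|r s|]; rewrite ?rmorphD ?rmorphM ?rmorph1. Qed.
Lemma SymA_good : good (SymA iA M).
Proof. exact: presAlg_good. Qed.

Lemma qM_hom : alghom (@qM R A iA M).
Proof.
split.
- by move=> x y; rewrite /qM /pgen (Defs.eq_pi (c_rel (S_add _ _ x y))) piD.
- by move=> x y; rewrite /qM /pgen (Defs.eq_pi (c_rel (S_mul _ _ x y))) piM.
- by rewrite /= -(rmorph1 iA) /qM /pgen (Defs.eq_pi (c_rel (S_cst _ _ 1))).
- by move=> r; rewrite /qM /pgen (Defs.eq_pi (c_rel (S_cst _ _ r))).
Qed.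
Lemma sM_add (m m' : M) : s (m + m') = s m + s m'.
Proof. by rewrite /sM /pgen (Defs.eq_pi (c_rel (S_madd _ m m'))) piD. Qed.
Lemma sM_scale (a : A) (m : M) : s (a *: m) = q a * s m.
Proof. by rewrite /sM /pgen (Defs.eq_pi (c_rel (S_scale _ a m))) piM. Qed.

Lemma lambda_prop : alghom (@lambdaM R A iA M) /\
  ((forall a, lambdaM (pT (q a)) = q a /\ lambdaM (dT (q a)) = 0) /\
   (forall m, lambdaM (pT (s m)) = 0 /\ lambdaM (dT (s m)) = s m)).
Proof.
have gS := SymA_good; have [qD qMM q1 qC] := qM_hom.
pose v1 := fun z : AlgA iA + M => match z with inl a => q a | inr m => 0 end.
pose v2 := fun z : AlgA iA + M => match z with inl a => 0 | inr m => s m end.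
have hrel : forall t u, @S_rel R A iA M t u ->
  ev (inR (SymA iA M)) v1 t = ev (inR (SymA iA M)) v1 u /\
  evd (inR (SymA iA M)) v1 v2 t = evd (inR (SymA iA M)) v1 v2 u.
  move=> t u Htu; destruct Htu; rewrite /= /v1 /v2; split;
   rewrite ?qD ?qMM ?sM_add ?sM_scale ?mulr0 ?mul0r ?addr0 //; try (by ring).
  exact: (qC r).
have [f [D [hf hD P]]] := lift_pres gS hrel.
apply: the_homP.
have [F [hF PF]] := Tan_lift gS hf hD.
exists F; split => //; split => [a|m].
- by case: (PF (q a)) => -> ->; case: (P (inl a)).
- by case: (PF (s m)) => -> ->; case: (P (inr m)).
Qed.

Lemma TpA_prop : alghom (@TpA R A iA) /\ forall x : AlgA iA,
  TpA (pT x) = pT (pa x) /\ TpA (dT x) = dT (pa x).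
Proof. exact: Tmap_prop (Tan_good _) (pT_hom AlgA_good). Qed.
Lemma TqM_prop : alghom (@TqM R A iA M) /\ forall x : AlgA iA,
  tq (pT x) = pT (q x) /\ tq (dT x) = dT (q x).
Proof. exact: Tmap_prop SymA_good qM_hom. Qed.



Lemma theta_prop : alghom (@thetaM R A iA M) /\
  forall (w : Tan (AlgA iA)) (v : SymA iA M),
  thetaM (pT (tens pa q w v)) = tens tp tq (pT w) (pT v) /\
  thetaM (dT (tens pa q w v)) = tens tp tq (dT w) (pT v) + tens tp tq (pT w) (dT v).
Proof.
have gTA := Tan_good (AlgA iA); have gS := SymA_good.
have gTTA := Tan_good (Tan (AlgA iA)); have gTS := Tan_good (SymA iA M).
have gZ : good (T2ATS iA M) := presAlg_good _.
have [tpH tpP] := TpA_prop; have [tqH tqP] := TqM_prop.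
pose g1 := tl tp tq \o @pT R (Tan (AlgA iA)).
pose e1 := tl tp tq \o @dT R (Tan (AlgA iA)).
pose g2 := tr tp tq \o @pT R (SymA iA M).
pose e2 := tr tp tq \o @dT R (SymA iA M).
have hb : forall b : AlgA iA, g1 (pa b) = g2 (q b) /\ e1 (pa b) = e2 (q b).
  move=> b; rewrite /g1 /g2 /e1 /e2 /=.
  case: (tpP b) => <- <-; case: (tqP b) => <- <-; split; [exact: (tbal tp tq (pT b)) | exact: (tbal tp tq (dT b))].
have [f [D [hf hD P1 P2]]] := Tens_lift2 gZ
  (hom_comp (pT_hom gTA) (tl_hom tp tq gTTA))
  (hom_comp_der (tl_hom tp tq gTTA) dT_der)
  (hom_comp (pT_hom gS) (tr_hom tp tq gTS))
  (hom_comp_der (tr_hom tp tq gTS) dT_der) hb.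
apply: the_homP.
have [F [hF PF]] := Tan_lift gZ hf hD.
exists F; split => // w v.
have [_ fM _ _] := hf; have [_ dM _] := hD.
rewrite (tensE pa q); case: (PF (tl pa q w * tr pa q v)) => -> ->.
rewrite fM dM; case: (P1 w) => -> ->; case: (P2 v) => -> ->.
by rewrite /g1 /g2 /e1 /e2 /= !tensE; split => //; rewrite addrC.
Qed.



Lemma ell_tens_zero_prop : alghom (@ell_tens_zero R A iA M) /\
  forall x y, ell_tens_zero (tens tp tq x y) = tens pa q (ellT x) (zeroT y).
Proof.
have gA := AlgA_good; have gTA := Tan_good (AlgA iA); have gS := SymA_good.
have gTTA := Tan_good (Tan (AlgA iA)); have gTS := Tan_good (SymA iA M).
have [tpH tpP] := TpA_prop; have [tqH tqP] := TqM_prop.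
have [eH eP] := ellT_prop gA; have [zH zP] := zeroT_prop gS.
apply: tensmap_prop => // b.
suff E : forall x : Tan (AlgA iA), ((tl pa q \o @ellT R (AlgA iA)) \o tp) x = ((tr pa q \o @zeroT R (SymA iA M)) \o tq) x by exact: E b.
apply: (@hom_uniq _ (@T_rel R (AlgA iA)) (TAS iA M)).
- exact: hom_comp tpH (hom_comp eH (tl_hom pa q gTA)).
- exact: hom_comp tqH (hom_comp zH (tr_hom pa q gS)).
case=> a /=.
- rewrite -[pgen _ (inl a)]/(pT a).
  case: (tpP a) => -> _; case: (tqP a) => -> _.
  case: (eP a) => -> _ _ _; case: (zP (q a)) => -> _.
  exact: (tbal pa q a).
- rewrite -[pgen _ (inr a)]/(dT a).
  case: (tpP a) => _ ->; case: (tqP a) => _ ->.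
  case: (eP a) => _ _ -> _; case: (zP (q a)) => _ ->.
  by rewrite (hom0 (tl_hom pa q gTA)) (hom0 (tr_hom pa q gS)).
Qed.

Lemma zero_tens_lambda_prop : alghom (@zero_tens_lambda R A iA M) /\
  forall x y, zero_tens_lambda (tens tp tq x y) = tens pa q (zeroT x) (lambdaM y).
Proof.
have gA := AlgA_good; have gTA := Tan_good (AlgA iA); have gS := SymA_good.
have gTTA := Tan_good (Tan (AlgA iA)); have gTS := Tan_good (SymA iA M).
have [tpH tpP] := TpA_prop; have [tqH tqP] := TqM_prop.
have [zH zP] := zeroT_prop gTA; have [lH [lP1 lP2]] := lambda_prop.
apply: tensmap_prop => // b.
suff E : forall x : Tan (AlgA iA), ((tl pa q \o @zeroT R (Tan (AlgA iA))) \o tp) x = ((tr pa q \o @lambdaM R A iA M) \o tq) x by exact: E b.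
apply: (@hom_uniq _ (@T_rel R (AlgA iA)) (TAS iA M)).
- exact: hom_comp tpH (hom_comp zH (tl_hom pa q gTA)).
- exact: hom_comp tqH (hom_comp lH (tr_hom pa q gS)).
case=> a /=.
- rewrite -[pgen _ (inl a)]/(pT a).
  case: (tpP a) => -> _; case: (tqP a) => -> _.
  case: (zP (pa a)) => -> _; case: (lP1 a) => -> _.
  exact: (tbal pa q a).
- rewrite -[pgen _ (inr a)]/(dT a).
  case: (tpP a) => _ ->; case: (tqP a) => _ ->.
  case: (zP (pa a)) => _ ->; case: (lP1 a) => _ ->.
  by rewrite (hom0 (tl_hom pa q gTA)) (hom0 (tr_hom pa q gS)).
Qed.

End SymBasics.
End RAlgGen.

Section Span.
Definition spanP (V : zmodType) (T : Type) (gen : T -> V) (x : V) :=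
  exists s : seq T, x = \sum_(i <- s) gen i.

Variables (V W : zmodType) (T T' : Type).
Lemma spanP0 (gen : T -> V) : spanP gen 0.
Proof. by exists [::]; rewrite big_nil. Qed.
Lemma spanP1 (gen : T -> V) i : spanP gen (gen i).
Proof. by exists [:: i]; rewrite big_seq1. Qed.
Lemma spanPD (gen : T -> V) x y : spanP gen x -> spanP gen y -> spanP gen (x + y).
Proof. by move=> [s1 ->] [s2 ->]; exists (s1 ++ s2); rewrite big_cat. Qed.
Lemma spanP_map (gen : T -> V) (gen' : T' -> W) (f : V -> W) (k : T -> T') :
  f 0 = 0 -> (forall x y, f (x + y) = f x + f y) -> (forall i, f (gen i) = gen' (k i)) ->
  forall x, spanP gen x -> spanP gen' (f x).
Proof.
move=> f0 fD fk x [s ->]; exists (map k s); rewrite big_map.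
elim: s => [|i s IH]; first by rewrite !big_nil f0.
by rewrite !big_cons fD fk IH.
Qed.
End Span.

Lemma spanPN (V : zmodType) (T : Type) (gen : T -> V) (k : T -> T) : (forall i, - gen i = gen (k i)) ->
  forall x, spanP gen x -> spanP gen (- x).
Proof.
move=> hk; apply: (spanP_map (gen := gen) (gen' := gen) (f := fun z => - z) (k := k)) => //; [exact: oppr0 | exact: opprD].
Qed.

Lemma spanPM (V : comPzRingType) (T1 T2 T3 : Type) (g1 : T1 -> V) (g2 : T2 -> V)
  (g3 : T3 -> V) (k : T1 -> T2 -> T3) :
  (forall i j, g1 i * g2 j = g3 (k i j)) ->
  forall x y, spanP g1 x -> spanP g2 y -> spanP g3 (x * y).
Proof.
move=> hk x y [s ->] hy; elim: s => [|i s IH]; first by rewrite big_nil mul0r; exact: spanP0.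
rewrite big_cons mulrDl; apply: spanPD => //.
have: spanP g3 (g1 i * y).
  apply: (@spanP_map _ _ _ _ g2 g3 (fun z => g1 i * z) (k i)) => //.
  - exact: mulr0.
  - by move=> a b; rewrite mulrDr.
exact.
Qed.

Section Ecomp.
Variables (R : comPzRingType) (X Y : ralg R) (E : Tan X -> Y).
Hypotheses (gX : good X) (hE : alghom E).
Lemma EpD x y : E (pT (x + y)) = E (pT x) + E (pT y).
Proof. by have [pD _ _ _] := pT_hom gX; have [eD _ _ _] := hE; rewrite pD eD. Qed.
Lemma EpM x y : E (pT (x * y)) = E (pT x) * E (pT y).
Proof. by have [_ pM _ _] := pT_hom gX; have [_ eM _ _] := hE; rewrite pM eM. Qed.
Lemma EpC r : E (pT (inR X r)) = inR Y r.
Proof. by have [_ _ _ pC] := pT_hom gX; have [_ _ _ eC] := hE; rewrite pC eC. Qed.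
Lemma Ep1 : E (pT 1) = 1.
Proof. by have [_ _ p1 _] := pT_hom gX; have [_ _ e1 _] := hE; rewrite p1 e1. Qed.
Lemma EdD x y : E (dT (x + y)) = E (dT x) + E (dT y).
Proof. by have [dD _ _] := @dT_der R X; have [eD _ _ _] := hE; rewrite dD eD. Qed.
Lemma EdM x y : E (dT (x * y)) = E (pT x) * E (dT y) + E (dT x) * E (pT y).
Proof. by have [_ dM _] := @dT_der R X; have [eD eM _ _] := hE; rewrite dM eD !eM. Qed.
Lemma EdC r : E (dT (inR X r)) = 0.
Proof. by have [_ _ dC] := @dT_der R X; rewrite dC (hom0 hE). Qed.
Lemma Ed1 : E (dT 1) = 0.
Proof. by rewrite (der1 gX (@dT_der R X)) (hom0 hE). Qed.
Lemma EpN x : E (pT (- x)) = - E (pT x).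
Proof. by rewrite (homN (pT_hom gX)) (homN hE). Qed.
Lemma EdN x : E (dT (- x)) = - E (dT x).
Proof. by rewrite (derN (@dT_der R X)) (homN hE). Qed.
Lemma Ep0 : E (pT 0) = 0.
Proof. by rewrite (hom0 (pT_hom gX)) (hom0 hE). Qed.
Lemma Ed0 : E (dT 0) = 0.
Proof. by rewrite (der0 (@dT_der R X)) (hom0 hE). Qed.
End Ecomp.

Section Main.
Variables (R A : comPzRingType) (iA : {rmorphism R -> A}) (M : lmodType A).
Local Notation q := (@qM R A iA M).
Local Notation s := (@sM R A iA M).
Local Notation pa := (@pA R A iA).
Local Notation da := (@dA R A iA).
Local Notation tp := (@TpA R A iA).
Local Notation tq := (@TqM R A iA M).
Local Notation TA := (Tan (AlgA iA)).
Local Notation SS := (SymA iA M).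
Local Notation XX := (TAS iA M).
Local Notation tn := (tens pa q).
Local Notation tL := (tl pa q).
Local Notation tR := (tr pa q).

Let gA := AlgA_good iA.
Let gTA := Tan_good (AlgA iA).
Let gS := SymA_good iA M.
Let gX : good XX := presAlg_good _.
Let tLh : alghom tL := tl_hom pa q gTA.
Let tRh : alghom tR := tr_hom pa q gS.
Let paH : alghom pa := pT_hom gA.

Lemma tn_mul x y x' y' : tn x y * tn x' y' = tn (x * x') (y * y').
Proof.
have [_ lM _ _] := tLh; have [_ rM _ _] := tRh.
by rewrite !tensE lM rM; ring.
Qed.
Lemma tn_x1 x : tn x 1 = tL x.
Proof. by have [_ _ r1 _] := tRh; rewrite tensE r1 mulr1. Qed.
Lemma tn_1y y : tn 1 y = tR y.
Proof. by have [_ _ l1 _] := tLh; rewrite tensE l1 mul1r. Qed.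
Lemma tn_0y y : tn 0 y = 0.
Proof. by rewrite tensE (hom0 tLh) mul0r. Qed.
Lemma tn_x0 x : tn x 0 = 0.
Proof. by rewrite tensE (hom0 tRh) mulr0. Qed.
Lemma tn_Dl x x' y : tn (x + x') y = tn x y + tn x' y.
Proof. by have [lD _ _ _] := tLh; rewrite !tensE lD mulrDl. Qed.
Lemma tn_Dr x y y' : tn x (y + y') = tn x y + tn x y'.
Proof. by have [rD _ _ _] := tRh; rewrite !tensE rD mulrDr. Qed.
Lemma tn_Nl x y : tn (- x) y = - tn x y.
Proof. by rewrite !tensE (homN tLh) mulNr. Qed.
Lemma tn_bal a : tn (pa a) 1 = tn 1 (q a).
Proof. by rewrite tn_x1 tn_1y; exact: (tbal pa q a). Qed.

Section Conn.
Variable H : Tan SS -> XX.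
Hypothesis hH : horizontal_connection H.

Let nab (m : M) := H (dT (s m)).

Lemma nab_add m m' : nab (m + m') = nab m + nab m'.
Proof.
case: hH => [[hD _ _ _] _ _ _ _].
have [dD _ _] := dT_der SS.
by rewrite /nab (sM_add iA) dD hD.
Qed.

Lemma nab_scale (a : A) m : nab (a *: m) = actA a (nab m) + tn (da a) (s m).
Proof.
case: hH => [[hD hM _ _] H1 H2 _ _].
have [_ dM _] := dT_der SS.
rewrite /nab (sM_scale iA) dM hD !hM H2.
have [_ tqP] := TqM_prop iA M; case: (tqP a) => _ <-.
by rewrite H1 H2 /actA tn_mul mul1r mulr1 -tn_bal.
Qed.

Lemma nab_R r m : nab (iA r *: m) = inR XX r * nab m.
Proof.
rewrite nab_scale /actA.
have -> : da (iA r) = 0 by have [_ _ dC] := dT_der (AlgA iA); exact: (dC r).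
rewrite tn_0y addr0; congr (_ * _).
have -> : pa (iA r) = inR TA r by have [_ _ _ pC] := paH; exact: (pC r).
by have [_ _ _ lC] := tLh; rewrite tn_x1 (lC r).
Qed.


Lemma TA_inv (w : TA) : spanP pa (@ellT R (AlgA iA) (pT w)) /\
  spanP (fun p : A * A => pa p.1 * da p.2) (@ellT R (AlgA iA) (dT w)).
Proof.
have [eH eP] := ellT_prop gA; have [paD paM pa1 paC] := paH.
elim/pres_ind: w.
- case=> a.
  + rewrite -[pgen _ (inl a)]/(pT a); case: (eP a) => -> _ -> _.
    by split; [exact: (spanP1 _ a) | exact: spanP0].
  + rewrite -[pgen _ (inr a)]/(dT a); case: (eP a) => _ -> _ ->.
    split; first exact: spanP0.
    have -> : (dT a : TA) = pa 1 * da a by rewrite pa1 mul1r.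
    exact: (spanP1 (fun p : A * A => pa p.1 * da p.2) (1, a)).
- move=> r; rewrite -[pcst _ r]/(inR TA r) (EpC gTA eH) (EdC eH).
  split; last exact: spanP0.
  by rewrite -paC; exact: (spanP1 _ (iA r)).
- move=> x y [h1 h2] [h3 h4]; rewrite (EpD gTA eH) (EdD eH).
  by split; apply: spanPD.
- move=> x y [h1 h2] [h3 h4]; rewrite (EpM gTA eH) (EdM eH); split.
  + by apply: (spanPM (k := fun a b : A => a * b) (g1:=pa) (g2:=pa) (g3:=pa) _ h1 h3) => // i j; rewrite paM.
  + apply: spanPD.
    * apply: (spanPM (k := fun (i : A) (p : A * A) => (i * p.1, p.2)) (g1:=pa) (g2:=(fun p : A * A => pa p.1 * da p.2)) (g3:=(fun p : A * A => pa p.1 * da p.2)) _ h1 h4) => // i j.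
      by rewrite /= paM; ring.
    * apply: (spanPM (k := fun (p : A * A) (i : A) => (p.1 * i, p.2)) (g1:=(fun p : A * A => pa p.1 * da p.2)) (g2:=pa) (g3:=(fun p : A * A => pa p.1 * da p.2)) _ h2 h3) => // i j.
      by rewrite /= paM; ring.
- move=> x [h1 h2]; rewrite (EpN gTA eH) (EdN eH); split.
  + by apply: (spanPN (k := fun a : A => - a)) => // i; rewrite (homN paH).
  + apply: (spanPN (k := fun p : A * A => (- p.1, p.2))) => // i.
    by rewrite /= (homN paH) mulNr.
Qed.

Lemma S_inv (v : SS) : spanP q (lambdaM (pT v)) /\
  spanP (fun p : A * M => q p.1 * s p.2) (lambdaM (dT v)).
Proof.
have [lH [lP1 lP2]] := lambda_prop iA M; have [qD qMM q1 qC] := qM_hom iA M.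
elim/pres_ind: v.
- case=> [a|m].
  + rewrite -[pgen _ (inl a)]/(q a); case: (lP1 a) => -> ->.
    by split; [exact: (spanP1 _ a) | exact: spanP0].
  + rewrite -[pgen _ (inr m)]/(s m); case: (lP2 m) => -> ->.
    split; first exact: spanP0.
    have -> : s m = q 1 * s m by rewrite q1 mul1r.
    exact: (spanP1 (fun p : A * M => q p.1 * s p.2) (1, m)).
- move=> r; rewrite -[pcst _ r]/(inR SS r) (EpC gS lH) (EdC lH).
  split; last exact: spanP0.
  by rewrite -qC; exact: (spanP1 _ (iA r)).
- move=> x y [h1 h2] [h3 h4]; rewrite (EpD gS lH) (EdD lH).
  by split; apply: spanPD.
- move=> x y [h1 h2] [h3 h4]; rewrite (EpM gS lH) (EdM lH); split.
  + by apply: (spanPM (k := fun a b : A => a * b) (g1:=q) (g2:=q) (g3:=q) _ h1 h3) => // i j; rewrite qMM.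
  + apply: spanPD.
    * apply: (spanPM (k := fun (i : A) (p : A * M) => (i * p.1, p.2)) (g1:=q) (g2:=(fun p : A * M => q p.1 * s p.2)) (g3:=(fun p : A * M => q p.1 * s p.2)) _ h1 h4) => // i j.
      by rewrite /= qMM; ring.
    * apply: (spanPM (k := fun (p : A * M) (i : A) => (p.1 * i, p.2)) (g1:=(fun p : A * M => q p.1 * s p.2)) (g2:=q) (g3:=(fun p : A * M => q p.1 * s p.2)) _ h2 h3) => // i j.
      by rewrite /= qMM; ring.
- move=> x [h1 h2]; rewrite (EpN gS lH) (EdN lH); split.
  + by apply: (spanPN (k := fun a : A => - a)) => // i; rewrite (homN (qM_hom iA M)).
  + apply: (spanPN (k := fun p : A * M => (- p.1, p.2))) => // i.
    by rewrite /= (homN (qM_hom iA M)) mulNr.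
Qed.



Definition g00 (a : A) : XX := tn (pa a) 1.
Definition g01 (p : A * M) : XX := tn (pa p.1) (s p.2).
Definition g10 (p : A * A) : XX := tn (pa p.1 * da p.2) 1.
Definition g11 (i : A * A * M) : XX := tn (pa i.1.1 * da i.1.2) (s i.2).

Let E3 (z : Tan XX) : XX := ell_tens_zero (thetaM z).
Let E4 (z : Tan XX) : XX := zero_tens_lambda (thetaM z).

Let E3h : alghom E3.
Proof. exact: hom_comp (proj1 (theta_prop iA M)) (proj1 (ell_tens_zero_prop iA M)). Qed.
Let E4h : alghom E4.
Proof. exact: hom_comp (proj1 (theta_prop iA M)) (proj1 (zero_tens_lambda_prop iA M)). Qed.

Lemma e3_tn w v : E3 (pT (tn w v)) = tn (@ellT R (AlgA iA) (pT w)) v.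
Proof.
rewrite /E3; case: (proj2 (theta_prop iA M) w v) => -> _.
by rewrite (proj2 (ell_tens_zero_prop iA M)); case: (proj2 (zeroT_prop gS) v) => ->.
Qed.
Lemma d3_tn w v : E3 (dT (tn w v)) = tn (@ellT R (AlgA iA) (dT w)) v.
Proof.
rewrite /E3; case: (proj2 (theta_prop iA M) w v) => _ ->.
have [[eD _ _ _] eP] := ell_tens_zero_prop iA M.
rewrite eD !eP; case: (proj2 (zeroT_prop gS) v) => -> ->.
by rewrite tn_x0 addr0.
Qed.
Lemma e4_tn w v : E4 (pT (tn w v)) = tn w (lambdaM (pT v)).
Proof.
rewrite /E4; case: (proj2 (theta_prop iA M) w v) => -> _.
by rewrite (proj2 (zero_tens_lambda_prop iA M)); case: (proj2 (zeroT_prop gTA) w) => ->.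
Qed.
Lemma d4_tn w v : E4 (dT (tn w v)) = tn w (lambdaM (dT v)).
Proof.
rewrite /E4; case: (proj2 (theta_prop iA M) w v) => _ ->.
have [[eD _ _ _] eP] := zero_tens_lambda_prop iA M.
rewrite eD !eP; case: (proj2 (zeroT_prop gTA) w) => -> ->.
by rewrite tn_0y add0r.
Qed.

Lemma tn1qs (a : A) (m : M) : tn 1 (q a * s m) = tn (pa a) (s m).
Proof.
have [_ rM _ _] := tRh; have [_ _ l1 _] := tLh.
by rewrite !tensE l1 mul1r rM -(tbal pa q a).
Qed.

Lemma paMul (a b : A) : pa (a * b) = pa a * pa b.
Proof. by have [_ pM _ _] := paH; exact: pM. Qed.

Local Ltac mul_tac := rewrite /g00 /g01 /g10 /g11 tn_mul;
  cbv beta iota delta [fst snd]; rewrite ?paMul;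
  congr (tens _ _ _ _); ring.

Lemma X_inv (z : XX) :
  [/\ spanP g00 (E4 (pT (E3 (pT z)))), spanP g01 (E4 (dT (E3 (pT z)))),
      spanP g10 (E4 (pT (E3 (dT z)))) & spanP g11 (E4 (dT (E3 (dT z))))].
Proof.
have [eH _] := ellT_prop gA; have [lH _] := lambda_prop iA M.
elim/pres_ind: z.
- case=> [w|v].
  + rewrite -[pgen _ (inl w)]/(tL w) -tn_x1 e3_tn d3_tn !e4_tn !d4_tn.
    rewrite (Ep1 gS lH) (Ed1 gS lH) !tn_x0.
    have [h1 h2] := TA_inv w.
    split; try exact: spanP0.
    * exact: (spanP_map (gen:=pa) (gen':=g00) (f:=fun x => tn x 1) (k:=id)
        (tn_0y 1) (fun x y => tn_Dl x y 1) (fun i => erefl) h1).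
    * exact: (spanP_map (gen:=fun p : A * A => pa p.1 * da p.2) (gen':=g10)
        (f:=fun x => tn x 1) (k:=id)
        (tn_0y 1) (fun x y => tn_Dl x y 1) (fun i => erefl) h2).
  + rewrite -[pgen _ (inr v)]/(tR v) -tn_1y e3_tn d3_tn.
    rewrite (Ep1 gTA eH) (Ed1 gTA eH) tn_0y (Ep0 gX E4h) (Ed0 E4h) e4_tn d4_tn.
    have [h1 h2] := S_inv v.
    split; try exact: spanP0.
    * exact: (spanP_map (gen:=q) (gen':=g00) (f:=fun y => tn 1 y) (k:=id)
        (tn_x0 1) (tn_Dr 1) (fun i => esym (tn_bal i)) h1).
    * exact: (spanP_map (gen:=fun p : A * M => q p.1 * s p.2) (gen':=g01)
        (f:=fun y => tn 1 y) (k:=id)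
        (tn_x0 1) (tn_Dr 1) (fun i => tn1qs i.1 i.2) h2).
- move=> r; rewrite -[pcst _ r]/(inR XX r) (EpC gX E3h) (EdC E3h).
  rewrite (EpC gX E4h) (EdC E4h) (Ep0 gX E4h) (Ed0 E4h).
  split; try exact: spanP0.
  have <- : g00 (iA r) = inR XX r.
    have [_ _ _ pC] := paH; have [_ _ _ lC] := tLh.
    by rewrite /g00 tn_x1 (pC r) (lC r).
  exact: spanP1.
- move=> x y [a1 a2 a3 a4] [b1 b2 b3 b4].
  rewrite (EpD gX E3h) (EdD E3h) !(EpD gX E4h) !(EdD E4h).
  by split; apply: spanPD.
- move=> x y [a1 a2 a3 a4] [b1 b2 b3 b4].
  rewrite (EpM gX E3h) (EdM E3h) !(EpD gX E4h) !(EdD E4h) !(EpM gX E4h) !(EdM E4h).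
  split.
  + by apply: (spanPM (g1:=g00) (g2:=g00) (g3:=g00) (k:=fun i j : A => i * j) _ a1 b1)
      => i j; mul_tac.
  + apply: spanPD.
    * by apply: (spanPM (g1:=g00) (g2:=g01) (g3:=g01)
        (k:=fun (i : A) (p : A * M) => (i * p.1, p.2)) _ a1 b2) => i j; mul_tac.
    * by apply: (spanPM (g1:=g01) (g2:=g00) (g3:=g01)
        (k:=fun (p : A * M) (i : A) => (p.1 * i, p.2)) _ a2 b1) => i j; mul_tac.
  + apply: spanPD.
    * by apply: (spanPM (g1:=g00) (g2:=g10) (g3:=g10)
        (k:=fun (i : A) (p : A * A) => (i * p.1, p.2)) _ a1 b3) => i j; mul_tac.
    * by apply: (spanPM (g1:=g10) (g2:=g00) (g3:=g10)
        (k:=fun (p : A * A) (i : A) => (p.1 * i, p.2)) _ a3 b1) => i j; mul_tac.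
  + apply: spanPD; apply: spanPD.
    * by apply: (spanPM (g1:=g00) (g2:=g11) (g3:=g11)
        (k:=fun (i : A) (j : A * A * M) => ((i * j.1.1, j.1.2), j.2)) _ a1 b4)
        => i j; mul_tac.
    * by apply: (spanPM (g1:=g01) (g2:=g10) (g3:=g11)
        (k:=fun (p : A * M) (p' : A * A) => ((p.1 * p'.1, p'.2), p.2)) _ a2 b3)
        => i j; mul_tac.
    * by apply: (spanPM (g1:=g10) (g2:=g01) (g3:=g11)
        (k:=fun (p' : A * A) (p : A * M) => ((p'.1 * p.1, p'.2), p.2)) _ a3 b2)
        => i j; mul_tac.
    * by apply: (spanPM (g1:=g11) (g2:=g00) (g3:=g11)
        (k:=fun (j : A * A * M) (i : A) => ((j.1.1 * i, j.1.2), j.2)) _ a4 b1)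
        => i j; mul_tac.
- move=> x [a1 a2 a3 a4].
  rewrite (EpN gX E3h) (EdN E3h) !(EpN gX E4h) !(EdN E4h).
  split.
  + by apply: (spanPN (k:=fun a : A => - a)) a1 => i;
      rewrite /g00 (homN paH) tn_Nl.
  + by apply: (spanPN (k:=fun p : A * M => (- p.1, p.2))) a2 => i;
      rewrite /g01 (homN paH) tn_Nl.
  + by apply: (spanPN (k:=fun p : A * A => (- p.1, p.2))) a3 => i;
      rewrite /g10 (homN paH) mulNr tn_Nl.
  + by apply: (spanPN (k:=fun p : A * A * M => ((- p.1.1, p.1.2), p.2))) a4 => i;
      rewrite /g11 (homN paH) mulNr tn_Nl.
Qed.

Lemma nab_omega m : OmegaTensM (nab m).
Proof.
case: hH => [hHh H1 H2 H3 H4].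
have [eSh eSP] := ellT_prop gS.
have [cSh cSP] := cT_prop gS.
have [lH [lP1 lP2]] := lambda_prop iA M.
have [THh THP] := Tmap_prop gX hHh.
have [TLh TLP] := Tmap_prop gS lH.
have e3 : E3 (dT (nab m)) = nab m.
  have := H3 (dT (dT (s m))); rewrite (proj2 (THP _)).
  by case: (eSP (s m)) => _ _ _ ->.
have e4 : E4 (dT (nab m)) = nab m.
  have := H4 (dT (dT (s m))); rewrite (proj2 (THP _)).
  case: (cSP (s m)) => _ _ _ ->; rewrite (proj2 (TLP _)).
  by case: (lP2 m) => _ ->.
have [_ _ _ h] := X_inv (nab m).
by rewrite -{1}e4 -{1}e3.
Qed.

End Conn.
End Main.

Unset Implicit Arguments.
Theorem mainTheorem7 (R A : comPzRingType) (iA : {rmorphism R -> A})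
  (M : lmodType A) (H : Tan (SymA iA M) -> TAS iA M) :
  horizontal_connection H ->
  module_connection (fun m : M => H (dT (sM iA m))).
Proof.
move=> hH; split.
- exact: nab_omega.
- exact: nab_add.
- exact: nab_R.
- exact: nab_scale.
Qed.
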